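(* Let $R$ be a ring with identity and involution $*$, and let $a,b\in R$ be core invertible with core inverses $a^{\oplus}$ and $b^{\oplus}$. If $ab=0$ and $a^*b=0$, then $a+b$ is core invertible and $$(a+b)^{\oplus} = b^{\pi}a^{\oplus} + b^{\oplus},$$ where $b^{\pi}=1-b^{\oplus}b$.
   Context: An involution on $R$ satisfies $(a^* )^*=a$, $(ab)^*=b^*a^*$, $(a+b)^*=a^*+b^*$. An element $x\in R$ is a core inverse of $a$ if $axa=a$, $xR=aR$ and $Rx=Ra^*$; it is unique when it exists and is denoted $a^{\oplus}$. *)

(* Defs.v *)
From mathcomp Require Import all_boot all_algebra.
Set Implicit Arguments. Unset Strict Implicit. Unset Printing Implicit Defensive.
Import GRing.Theory.
Local Open Scope ring_scope.

Definition involution (R : pzRingType) (star : R -> R) : Prop :=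
  [/\ forall a, star (star a) = a,
      forall a b, star (a * b) = star b * star a &
      forall a b, star (a + b) = star a + star b].

Definition same_right_ideal (R : pzRingType) (x y : R) : Prop :=
  (exists u, x = y * u) /\ (exists v, y = x * v).

Definition same_left_ideal (R : pzRingType) (x y : R) : Prop :=
  (exists u, x = u * y) /\ (exists v, y = v * x).

Definition is_core_inverse (R : pzRingType) (star : R -> R) (a x : R) : Prop :=
  [/\ a * x * a = a, same_right_ideal x a & same_left_ideal x (star a)].

Definition core_invertible (R : pzRingType) (star : R -> R) (a : R) : Prop :=
  exists x, is_core_inverse star a x.

(* Main.v *)
Require Import Defs.
From mathcomp Require Import all_boot all_algebra.
Import GRing.Theory.
Local Open Scope ring_scope.

Lemma core_props (R : pzRingType) (star : R -> R) (a p : R) :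
  involution star -> is_core_inverse star a p ->
  [/\ a * p * a = a, p * a * p = p, star (a * p) = a * p,
      p * a * a = a & a * p * p = p].
Proof.
move=> [s2 sM sD] [apa [[u pu] [v av]] [[u' pu'] [v' av']]].
have sa : star a = star a * star (a * p).
  by rewrite -sM apa.
have px : p = p * star (a * p) by rewrite {1}pu' {1}sa mulrA -pu'.
have herm : star (a * p) = a * p.
  have e : a * p = a * p * star (a * p) by rewrite -mulrA -px.
  by rewrite {1}e sM s2 -e.
have pap : p * a * p = p by rewrite -mulrA -herm -px.
split=> //.
  by rewrite {2}av mulrA pap -av.
by rewrite {2}pu mulrA apa -pu.
Qed.

Lemma mk_core (R : pzRingType) (star : R -> R) (s y : R) :
  involution star ->
  s * y * s = s -> y * s * y = y -> star (s * y) = s * y ->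
  y * s * s = s -> s * y * y = y -> is_core_inverse star s y.
Proof.
move=> [s2 sM sD] sys ysy h yss syy; split=> //.
  split; [exists (y * y) | exists (s * s)]; by rewrite mulrA.
split.
  exists (y * star y); by rewrite -mulrA -sM h mulrA.
exists (star s * s); by rewrite -mulrA -{1}h -sM sys.
Qed.

Theorem theorem4p3 (R : pzRingType) (star : R -> R) (a b ac bc : R) :
  involution star ->
  is_core_inverse star a ac ->
  is_core_inverse star b bc ->
  a * b = 0 -> star a * b = 0 ->
  core_invertible star (a + b) /\
  is_core_inverse star (a + b) ((1 - bc * b) * ac + bc).
Proof.
move=> inv ca cb ab a_b.
have [apa pap hA paa app] := @core_props _ _ _ _ inv ca.
have [bqb qbq hB qbb bqq] := @core_props _ _ _ _ inv cb.
have [s2 sM sD] := inv.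
have s0 : star 0 = 0.
  by apply: (@addrI _ (star 0)); rewrite -sD !addr0.
have pb : ac * b = 0.
  case: ca => _ _ [[u' ->] _]; by rewrite -mulrA a_b mulr0.
have qa : bc * a = 0.
  case: cb => _ _ [[u' ->] _].
  have : star b * a = 0 by rewrite -(s2 a) -sM a_b s0.
  by rewrite -mulrA => ->; rewrite mulr0.
have aq : a * bc = 0.
  case: cb => _ [[w ->] _] _; by rewrite mulrA ab mul0r.
have pq : ac * bc = 0.
  case: cb => _ [[w ->] _] _; by rewrite mulrA pb mul0r.
have qp : bc * ac = 0.
  case: ca => _ [[w ->] _] _; by rewrite mulrA qa mul0r.
have G2 : forall u v w : R, u * v = w -> forall x, x * u * v = x * w.
  by move=> u v w e x; rewrite -mulrA e.
have G3 : forall u v z w : R, u * v * z = w -> forall x, x * u * v * z = x * w.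
  by move=> u v z w e x; rewrite -e !mulrA.
have ab' := G2 _ _ _ ab; have pb' := G2 _ _ _ pb; have qa' := G2 _ _ _ qa.
have aq' := G2 _ _ _ aq. have pq' := G2 _ _ _ pq. have qp' := G2 _ _ _ qp.
have apa' := G3 _ _ _ _ apa; have pap' := G3 _ _ _ _ pap.
have bqb' := G3 _ _ _ _ bqb; have qbq' := G3 _ _ _ _ qbq.
have paa' := G3 _ _ _ _ paa; have app' := G3 _ _ _ _ app.
have qbb' := G3 _ _ _ _ qbb; have bqq' := G3 _ _ _ _ bqq.
have sy : (a + b) * ((1 - bc * b) * ac + bc) = a * ac + b * bc.
  by rewrite !(mulrDl, mulrDr, mulrN, mulNr, mul1r, mulr1, mulrA);
  rewrite ?(pq', qp', pq, qp, ab', pb', qa', aq', apa', pap', bqb', qbq', paa', app', qbb', bqq', ab, pb, qa, aq, apa, pap, bqb, qbq, paa, app, qbb, bqq, mul0r, mulr0, oppr0, subr0, addr0, add0r, addrN, subrK) ?addrA.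
have sys : (a + b) * ((1 - bc * b) * ac + bc) * (a + b) = a + b by rewrite sy; rewrite !(mulrDl, mulrDr, mulrN, mulNr, mul1r, mulr1, mulrA);
  rewrite ?(pq', qp', pq, qp, ab', pb', qa', aq', apa', pap', bqb', qbq', paa', app', qbb', bqq', ab, pb, qa, aq, apa, pap, bqb, qbq, paa, app, qbb, bqq, mul0r, mulr0, oppr0, subr0, addr0, add0r, addrN, subrK) ?addrA.
have ysy : ((1 - bc * b) * ac + bc) * (a + b) * ((1 - bc * b) * ac + bc) = (1 - bc * b) * ac + bc.
  by rewrite -mulrA sy; rewrite !(mulrDl, mulrDr, mulrN, mulNr, mul1r, mulr1, mulrA);
  rewrite ?(pq', qp', pq, qp, ab', pb', qa', aq', apa', pap', bqb', qbq', paa', app', qbb', bqq', ab, pb, qa, aq, apa, pap, bqb, qbq, paa, app, qbb, bqq, mul0r, mulr0, oppr0, subr0, addr0, add0r, addrN, subrK) ?addrA.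
have he : star ((a + b) * ((1 - bc * b) * ac + bc)) = (a + b) * ((1 - bc * b) * ac + bc).
  by rewrite sy sD hA hB.
have yss : ((1 - bc * b) * ac + bc) * (a + b) * (a + b) = a + b by rewrite !(mulrDl, mulrDr, mulrN, mulNr, mul1r, mulr1, mulrA);
  rewrite ?(pq', qp', pq, qp, ab', pb', qa', aq', apa', pap', bqb', qbq', paa', app', qbb', bqq', ab, pb, qa, aq, apa, pap, bqb, qbq, paa, app, qbb, bqq, mul0r, mulr0, oppr0, subr0, addr0, add0r, addrN, subrK) ?addrA.
have syy : (a + b) * ((1 - bc * b) * ac + bc) * ((1 - bc * b) * ac + bc) = (1 - bc * b) * ac + bc.
  by rewrite sy; rewrite !(mulrDl, mulrDr, mulrN, mulNr, mul1r, mulr1, mulrA);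
  rewrite ?(pq', qp', pq, qp, ab', pb', qa', aq', apa', pap', bqb', qbq', paa', app', qbb', bqq', ab, pb, qa, aq, apa, pap, bqb, qbq, paa, app, qbb, bqq, mul0r, mulr0, oppr0, subr0, addr0, add0r, addrN, subrK) ?addrA.
have H := @mk_core _ _ _ _ inv sys ysy he yss syy.
by split=> //; exists ((1 - bc * b) * ac + bc).
Qed.
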